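(* Let $m$ be a positive integer, $\tau=\sigma/m$, and consider the explicit Euler scheme $$S^{n+1} = S^n - \tau\, S^n\circ T^{n-m} - c\tau S^n,\qquad I^{n+1} = I^n + \tau\, S^n\circ T^{n-m} - b\tau I^n,\qquad R^{n+1} = R^n + b\tau I^n + c\tau S^n,$$ for $0\le n\le m\mathcal{T}/\sigma$, where for $-m\le n\le 0$ the matrices $S^n,I^n,R^n$ are the history functions evaluated on the grids $\mathcal{G}$ and $\mathcal{G}_t$. Suppose the discretized history values satisfy $D_1$–$D_4$. Then $D_2$ holds for the scheme without any restriction on $\tau$. Furthermore, if $$\tau=\frac{\sigma}{m}\le \min\left\{\frac{1}{\bar T + c},\ \frac{1}{b}\right\},\qquad \bar T=\max_{(x_k,y_l)\in\mathcal{G}} M\sum_{i=1}^p w_i\,W(x_k+\eta_i,y_l+\xi_i),$$ $$M=\max_{(x_k,y_l)\in\mathcal{G}}\{S(0,x_k,y_l)+I(0,x_k,y_l)+R(0,x_k,y_l)\},$$ then $D_1$, $D_3$ and $D_4$ also hold up to step $n\le m\mathcal{T}/\sigma$.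
   Context: $\Omega=(0,A)\times(0,B)$; spatial grid $\mathcal{G}=\{(x_k,y_l): x_k=(k-1)h_x,\ y_l=(l-1)h_y,\ 1\le k\le K,\ 1\le l\le L\}$ with $(K-1)h_x=A$, $(L-1)h_y=B$. Time grid $\mathcal{G}_t=\{t_n=n\sigma/m:\ -m\le n\le m\mathcal{T}/\sigma\}$. Constants $b,c,\sigma,\delta,\mathcal{T}>0$. $W\ge0$ is continuous and bounded. Cubature points $(x+\eta_i,y+\xi_i)$ in the open disc of radius $\delta$ around $(x,y)$, $i=1,\dots,p$, with weights $w_i>0$. For $X\in\{S,I,R\}$, $X^n$ is the $K\times L$ matrix whose $(k,l)$ entry approximates the value at $(x_k,y_l)$ and time $t_n$; $\circ$ is the entrywise (Hadamard) product. $T^{n-m}$ is the matrix with entries $T^{n-m}_{k,l}=\sum_{i=1}^p w_i W(x_k+\eta_i,y_l+\xi_i)\,\hat I^{n-m}(x_k+\eta_i,y_l+\xi_i)$, where $\hat I^{n-m}$ is obtained from the entries of $I^{n-m}$ (taken as zero outside $\Omega$) by a fixed interpolation which, for non-negative grid data, produces values between $0$ and the maximum of the grid data. Discrete properties: $D_1$: all entries of $S^n,I^n,R^n$ are non-negative; $D_2$: $S^n_{k,l}+I^n_{k,l}+R^n_{k,l}$ is independent of $n$ for every $(k,l)$; $D_3$: $S^{n+1}_{k,l}\le S^n_{k,l}$; $D_4$: $R^{n+1}_{k,l}\ge R^n_{k,l}$. *)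

(* Defs.v *)
From HB Require Import structures.
From mathcomp Require Import all_boot all_order all_algebra.
From mathcomp Require Import reals topology normedtype.
Set Implicit Arguments. Unset Strict Implicit. Unset Printing Implicit Defensive.
Import Order.TTheory GRing.Theory Num.Theory.
Local Open Scope ring_scope.

Section Defs.
Variable R : realType.

(* Grid points, 0-based: x_k = k * hx  (paper: x_k = (k-1) h_x, 1 <= k <= K). *)
Definition gx (hx : R) (K : nat) (k : 'I_K) : R := (k : nat)%:R * hx.
Definition gy (hy : R) (L : nat) (l : 'I_L) : R := (l : nat)%:R * hy.

Definition Tmat (K L p : nat) (hx hy : R) (w eta xi : 'I_p -> R)
  (W : R -> R -> R) (interp : ('I_K -> 'I_L -> R) -> R -> R -> R)
  (Id : 'I_K -> 'I_L -> R) (k : 'I_K) (l : 'I_L) : R :=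
  \sum_(i < p) w i * W (gx hx k + eta i) (gy hy l + xi i)
               * interp Id (gx hx k + eta i) (gy hy l + xi i).

(* Maximum of grid data (all data considered here are >= 0; default 0). *)
Definition gridmax (K L : nat) (f : 'I_K -> 'I_L -> R) : R :=
  \big[Num.max/0]_(k < K) \big[Num.max/0]_(l < L) f k l.

Definition Mmax (K L : nat) (hx hy : R) (S0 I0 R0 : R -> R -> R -> R) : R :=
  gridmax (fun (k : 'I_K) (l : 'I_L) =>
    S0 0 (gx hx k) (gy hy l) + I0 0 (gx hx k) (gy hy l) + R0 0 (gx hx k) (gy hy l)).

Definition Tbar (K L p : nat) (hx hy : R) (w eta xi : 'I_p -> R)
  (W : R -> R -> R) (M : R) : R :=
  gridmax (fun (k : 'I_K) (l : 'I_L) =>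
    M * \sum_(i < p) w i * W (gx hx k + eta i) (gy hy l + xi i)).

(* Admissible time indices: -m <= n and n-1 <= m T / sigma
   (history indices -m..0 and computed indices up to the last scheme step). *)
Definition valid_idx (m : nat) (sigma Tf : R) (n : int) : Prop :=
  (- (m%:Z) <= n)%R /\ (n - 1)%:~R <= m%:R * Tf / sigma.

(* Indices n at which a time step n -> n+1 is taken (history or scheme). *)
Definition step_idx (m : nat) (sigma Tf : R) (n : int) : Prop :=
  (- (m%:Z) <= n)%R /\ n%:~R <= m%:R * Tf / sigma.

End Defs.

(* Main.v *)
Require Import Defs.
From HB Require Import structures.
From mathcomp Require Import all_boot all_order all_algebra.
From mathcomp Require Import reals topology normedtype.
From mathcomp Require Import lra ring.
Import Order.TTheory GRing.Theory Num.Theory numFieldNormedType.Exports.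
Local Open Scope ring_scope.

From mathcomp Require Import zify.

Lemma gridmax_ge (R : realType) K L (f : 'I_K -> 'I_L -> R) k l : f k l <= gridmax f.
Proof.
rewrite /gridmax. apply: le_trans (le_bigmax _ _ k).
exact: le_bigmax.
Qed.
Lemma gridmax_le (R : realType) K L (f : 'I_K -> 'I_L -> R) M : 0 <= M ->
  (forall k l, f k l <= M) -> gridmax f <= M.
Proof.
move=> M0 H; rewrite /gridmax; apply: bigmax_le => // k _.
by apply: bigmax_le => // l _.
Qed.
Lemma gridmax_ge0 (R : realType) K L (f : 'I_K -> 'I_L -> R) : 0 <= gridmax f.
Proof.
rewrite /gridmax; elim/big_rec: _ => // i x _ hx; by rewrite le_max hx orbT.
Qed.
Lemma intle (R : realType) (N : R) (i j : int) : (i <= j)%R -> j%:~R <= N -> i%:~R <= N.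
Proof. by move=> h; apply: le_trans; rewrite ler_int. Qed.
Lemma L1 (n : nat) : (n%:Z - 1 <= n%:Z)%R. Proof. lia. Qed.
Lemma L2 (j : int) (n : nat) : (j <= n.+1%:Z)%R -> ~~ (j <= n%:Z)%R -> j = n%:Z + 1.
Proof. lia. Qed.
Lemma L3 (n m : nat) : (- (m%:Z) <= n%:Z - m%:Z)%R. Proof. lia. Qed.
Lemma L4 (n m : nat) : (n%:Z - m%:Z - 1 <= n%:Z)%R. Proof. lia. Qed.
Lemma L5 (n m : nat) : (n%:Z - m%:Z <= n%:Z)%R. Proof. lia. Qed.
Lemma L6 (n m : nat) : (- (m%:Z) <= n%:Z)%R. Proof. lia. Qed.
Lemma intleN (R : realType) (N : R) (i : int) (j : nat) : (i <= j%:Z)%R -> j%:R <= N -> i%:~R <= N.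
Proof. exact: intle. Qed.

Theorem theorem5 (R : realType)
  (A B b c sigma delta Tf hx hy : R) (K L p m : nat)
  (W : R -> R -> R) (w eta xi : 'I_p -> R)
  (interp : ('I_K -> 'I_L -> R) -> R -> R -> R)
  (S0 I0 R0 : R -> R -> R -> R)
  (S I Rc : int -> 'I_K -> 'I_L -> R) :
  0 < A -> 0 < B -> 0 < b -> 0 < c -> 0 < sigma -> 0 < delta -> 0 < Tf ->
  0 < hx -> 0 < hy -> (K%:R - 1) * hx = A -> (L%:R - 1) * hy = B ->
  (0 < m)%N ->
  (* W continuous, bounded, non-negative *)
  continuous (fun z : R * R => W z.1 z.2) ->
  (exists C : R, forall x y, W x y <= C) ->
  (forall x y, 0 <= W x y) ->
  (* cubature points in the open disc of radius delta, positive weights *)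
  (forall i, eta i ^+ 2 + xi i ^+ 2 < delta ^+ 2) ->
  (forall i, 0 < w i) ->
  (* the interpolation maps non-negative grid data into [0, max data] *)
  (forall f : 'I_K -> 'I_L -> R, (forall k l, 0 <= f k l) ->
     forall x y, 0 <= interp f x y /\ interp f x y <= gridmax f) ->
  (* history values on the grids *)
  (forall n : int, (- (m%:Z) <= n)%R -> (n <= 0)%R -> forall k l,
     [/\ S n k l = S0 (n%:~R * sigma / m%:R) (gx hx k) (gy hy l),
         I n k l = I0 (n%:~R * sigma / m%:R) (gx hx k) (gy hy l) &
         Rc n k l = R0 (n%:~R * sigma / m%:R) (gx hx k) (gy hy l)]) ->
  (* history satisfies D1 - D4 *)
  (forall n : int, (- (m%:Z) <= n)%R -> (n <= 0)%R -> forall k l,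
     [/\ 0 <= S n k l, 0 <= I n k l & 0 <= Rc n k l]) ->
  (forall n n' : int, (- (m%:Z) <= n)%R -> (n <= 0)%R ->
     (- (m%:Z) <= n')%R -> (n' <= 0)%R -> forall k l,
     S n k l + I n k l + Rc n k l = S n' k l + I n' k l + Rc n' k l) ->
  (forall n : int, (- (m%:Z) <= n)%R -> (n < 0)%R -> forall k l,
     S (n + 1) k l <= S n k l) ->
  (forall n : int, (- (m%:Z) <= n)%R -> (n < 0)%R -> forall k l,
     Rc n k l <= Rc (n + 1) k l) ->
  (* explicit Euler scheme, tau = sigma / m, for 0 <= n <= m Tf / sigma *)
  (forall n : nat, n%:R <= m%:R * Tf / sigma -> forall k l,
     let tau := sigma / m%:R in
     let Tn := Tmat hx hy w eta xi W interp (I (n%:Z - m%:Z)) k l in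
     [/\ S (n%:Z + 1) k l = S n k l - tau * (S n k l * Tn) - c * tau * S n k l,
         I (n%:Z + 1) k l = I n k l + tau * (S n k l * Tn) - b * tau * I n k l &
         Rc (n%:Z + 1) k l = Rc n k l + b * tau * I n k l + c * tau * S n k l]) ->
  (* D2 without restriction on tau *)
  (forall n n' : int, valid_idx m sigma Tf n -> valid_idx m sigma Tf n' ->
     forall k l, S n k l + I n k l + Rc n k l = S n' k l + I n' k l + Rc n' k l)
  /\
  (* D1, D3, D4 under the step-size restriction *)
  (let tau := sigma / m%:R in
   let M := Mmax K L hx hy S0 I0 R0 in
   let Tb := Tbar K L hx hy w eta xi W M in
   tau <= 1 / (Tb + c) -> tau <= 1 / b ->
   (forall n : int, valid_idx m sigma Tf n -> forall k l,
      [/\ 0 <= S n k l, 0 <= I n k l & 0 <= Rc n k l]) /\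
   (forall n : int, step_idx m sigma Tf n -> forall k l,
      S (n + 1) k l <= S n k l /\ Rc n k l <= Rc (n + 1) k l)).
Proof.
move=> _ _ hb hc hsig _ _ _ _ _ _ hm _ _ hW _ hw hint hhist hpos hsum hS hR hsch.
set N := m%:R * Tf / sigma.
set sm := fun (n : int) k l => S n k l + I n k l + Rc n k l.
have hsum0 : forall n, (- (m%:Z) <= n)%R -> (n <= 0)%R -> forall k l, sm n k l = sm 0 k l.
  move=> n h1 h2 k l; rewrite /sm; exact: (hsum n 0 h1 h2 (oppr_le0 _) (lexx _) k l).
have schD : forall n : nat, n%:R <= N -> forall k l, sm (Posz n.+1) k l = sm n k l.
  move=> n hn k l; case: (hsch n hn k l) => e1 e2 e3.
  have -> : Posz n.+1 = n%:Z + 1 by rewrite -addn1 PoszD.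
  by rewrite /sm e1 e2 e3; ring.
have consN : forall n : nat, (n%:Z - 1)%:~R <= N -> forall k l, sm n k l = sm 0 k l.
  elim=> [//|n IH] hn k l.
  have hn' : n%:R <= N by move: hn; rewrite -addn1 PoszD addrK.
  rewrite schD // IH //; apply: intleN hn'; exact: L1.
have sumall : forall n : int, valid_idx m sigma Tf n -> forall k l, sm n k l = sm 0 k l.
  case=> [n|n] [h1 h2] k l; first exact: consN.
  by apply: hsum0.
split.
  by move=> n n' h1 h2 k l; rewrite -/(sm n k l) -/(sm n' k l) !sumall.
move=> tau M Tb ht1 ht2.
have htau : 0 < tau by rewrite /tau divr_gt0 // ltr0n.
have hM0 : 0 <= M by apply: gridmax_ge0.
have tau0 : 0 <= tau := ltW htau.
have b0 : 0 <= b := ltW hb.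
have c0 : 0 <= c := ltW hc.
have hTb0 : 0 <= Tb by apply: gridmax_ge0.
have ht1' : tau * (Tb + c) <= 1.
  by rewrite ler_pdivlMr ?mul1r in ht1 => //; apply: ltr_wpDl.
have ht2' : tau * b <= 1 by rewrite ler_pdivlMr ?mul1r in ht2.
have Tge0 : forall j : int, (forall k l, 0 <= I j k l) -> forall k l,
    0 <= Tmat hx hy w eta xi W interp (I j) k l.
  move=> j hj k l; apply: sumr_ge0 => i _.
  by apply: mulr_ge0; [apply: mulr_ge0; [apply: ltW | ] | exact: (hint _ hj _ _).1].
have Hsum0M : forall k l, sm 0 k l <= M.
  move=> k l; have [e1 e2 e3] := hhist 0 (oppr_le0 _) (lexx _) k l.
  rewrite /sm e1 e2 e3 mul0r mul0r /M /Mmax.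
  apply: (@gridmax_ge R K L (fun (k : 'I_K) (l : 'I_L) =>
    S0 0 (gx hx k) (gy hy l) + I0 0 (gx hx k) (gy hy l) + R0 0 (gx hx k) (gy hy l))).
have Tle : forall j : int, valid_idx m sigma Tf j ->
    (forall k l, [/\ 0 <= S j k l, 0 <= I j k l & 0 <= Rc j k l]) -> forall k l,
    Tmat hx hy w eta xi W interp (I j) k l <= Tb.
  move=> j hj hp k l.
  have hI : forall k l, 0 <= I j k l by move=> a a0; case: (hp a a0).
  have hgm : gridmax (I j) <= M.
    apply: gridmax_le => // k' l'.
    apply: le_trans (Hsum0M k' l'); rewrite -(sumall _ hj) /sm.
    by case: (hp k' l') => a _ d; lra.
  apply: le_trans (@gridmax_ge R K L (fun (k : 'I_K) (l : 'I_L) =>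
    M * \sum_(i < p) w i * W (gx hx k + eta i) (gy hy l + xi i)) k l).
  rewrite /Tmat mulr_sumr; apply: ler_sum => i _.
  rewrite [M * _]mulrC; apply: ler_wpM2l; first by apply: mulr_ge0; [exact: ltW | exact: hW].
  exact: le_trans (hint _ hI _ _).2 hgm.
have Q : forall n : nat, (n%:Z - 1)%:~R <= N -> forall j : int,
    (- (m%:Z) <= j)%R -> (j <= n)%R -> forall k l,
    [/\ 0 <= S j k l, 0 <= I j k l & 0 <= Rc j k l].
  elim=> [|n IH] hn j hj1 hj2 k l; first exact: hpos.
  have hn' : n%:R <= N by move: hn; rewrite -addn1 PoszD addrK.
  have hIH := IH (@intle R N (n%:Z - 1) n%:Z (L1 n) hn').
  have [hjn|hjn] := boolP (j <= n)%R; first exact: hIH.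
  have -> : j = n%:Z + 1 by apply: L2.
  have hnm : valid_idx m sigma Tf (n%:Z - m%:Z).
    split; first exact: L3. by apply: intleN hn'; exact: L4.
  have hpm : forall k l, [/\ 0 <= S (n%:Z - m%:Z) k l, 0 <= I (n%:Z - m%:Z) k l
      & 0 <= Rc (n%:Z - m%:Z) k l] by move=> a a0; apply: hIH; [exact: L3 | exact: L5].
  have hT1 := Tle _ hnm hpm k l.
  have hT0 := Tge0 (n%:Z - m%:Z) (fun k l => let: And3 _ x _ := hpm k l in x) k l.
  have [s0 i0 r0] : [/\ 0 <= S n k l, 0 <= I n k l & 0 <= Rc n k l] by apply: hIH; [exact: L6 | exact: lexx].
  case: (hsch n hn' k l) => e1 e2 e3; rewrite e1 e2 e3.
  move: (Tmat _ _ _ _ _ _ _ _ _ _) hT1 hT0 => T hT1 hT0.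
  rewrite -/tau; split.
  - have h1 : 0 <= S n k l * (1 - tau * (Tb + c)) by rewrite mulr_ge0 // subr_ge0.
    have h2 : 0 <= S n k l * (tau * (Tb - T)) by rewrite mulr_ge0 // mulr_ge0 // subr_ge0.
    lra.
  - have h1 : 0 <= I n k l * (1 - b * tau) by rewrite mulr_ge0 // subr_ge0 mulrC.
    have h2 : 0 <= tau * (S n k l * T) by repeat (assumption || apply: mulr_ge0).
    lra.
  - have h1 : 0 <= b * tau * I n k l by repeat (assumption || apply: mulr_ge0).
    have h2 : 0 <= c * tau * S n k l by repeat (assumption || apply: mulr_ge0).
    lra.
have D1 : forall n : int, valid_idx m sigma Tf n -> forall k l,
    [/\ 0 <= S n k l, 0 <= I n k l & 0 <= Rc n k l].
  move=> n [h1 h2] k l; case: n h1 h2 => [n|n] h1 h2.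
    by apply: (Q n) => //.
  by apply: hpos.
split=> // n [h1 h2] k l; case: n h1 h2 => [n|n] h1 h2; last first.
  by split; [apply: hS | apply: hR].
have hv : valid_idx m sigma Tf n by split; [exact: h1 | apply: intle h2; exact: L1].
have hnm : valid_idx m sigma Tf (n%:Z - m%:Z).
  by split; [exact: L3 | apply: intle h2; exact: L4].
have hT0 := Tge0 (n%:Z - m%:Z) (fun k l => let: And3 _ x _ := D1 _ hnm k l in x) k l.
have [s0 i0 r0] := D1 _ hv k l.
case: (hsch n h2 k l) => e1 e2 e3; rewrite e1 e3.
have h3 : 0 <= tau * (S n k l * Tmat hx hy w eta xi W interp (I (n%:Z - m%:Z)) k l)
  by repeat (assumption || apply: mulr_ge0).
have h4 : 0 <= c * tau * S n k l by repeat (assumption || apply: mulr_ge0).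
have h5 : 0 <= b * tau * I n k l by repeat (assumption || apply: mulr_ge0).
rewrite -/tau; split; lra.
Qed.
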